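(* A topological vector space $E$ (over $\mathbb{R}$ or $\mathbb{C}$) is $p$-normed for some $0<p\le1$ if and only if $E$ is Fréchet–Urysohn and admits a fundamental sequence of bounded sets.
   Context: A tvs is $p$-normed if its topology is generated by a $p$-norm, i.e. a map $\|\cdot\|:E\to[0,\infty)$ with $\|x\|=0$ iff $x=0$, $\|\lambda x\|=|\lambda|^p\|x\|$ and $\|x+y\|\le\|x\|+\|y\|$. A fundamental sequence of bounded sets is a sequence $(B_n)$ of bounded subsets of $E$ such that every bounded subset of $E$ is contained in some $B_n$. A space is Fréchet–Urysohn if whenever $x\in\overline{A}$ there is a sequence in $A$ converging to $x$. *)

(* Defs.v *)
From Stdlib Require Import Reals.
Open Scope R_scope.

Inductive field_choice := FR | FC.

Definition scal (k : field_choice) : Type :=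
  match k with FR => R | FC => (R * R)%type end.

Definition scal_add (k : field_choice) : scal k -> scal k -> scal k :=
  match k with
  | FR => fun a b => a + b
  | FC => fun a b => (fst a + fst b, snd a + snd b)
  end.

Definition scal_mul (k : field_choice) : scal k -> scal k -> scal k :=
  match k with
  | FR => fun a b => a * b
  | FC => fun a b => (fst a * fst b - snd a * snd b, fst a * snd b + snd a * fst b)
  end.

Definition scal_one (k : field_choice) : scal k :=
  match k with FR => 1 | FC => (1, 0) end.

Definition scal_opp (k : field_choice) : scal k -> scal k :=
  match k with FR => fun a => - a | FC => fun a => (- fst a, - snd a) end.

Definition scal_abs (k : field_choice) : scal k -> R :=
  match k with
  | FR => fun a => Rabs a
  | FC => fun a => sqrt (fst a * fst a + snd a * snd a)
  end.

Definition scal_ofR (k : field_choice) : R -> scal k :=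
  match k with FR => fun t => t | FC => fun t => (t, 0) end.

(** a ^ p for a >= 0, with the convention 0 ^ p = 0 (p > 0). *)
Definition powp (a p : R) : R :=
  if Req_EM_T a 0 then 0 else Rpower a p.

Section TVS.
Variable k : field_choice.
Variable E : Type.
Variable add : E -> E -> E.
Variable zero : E.
Variable opp : E -> E.
Variable smul : scal k -> E -> E.
Variable is_open : (E -> Prop) -> Prop.

Definition sub (x y : E) : E := add x (opp y).

Definition is_vector_space : Prop :=
  (forall x y z, add x (add y z) = add (add x y) z) /\
  (forall x y, add x y = add y x) /\
  (forall x, add zero x = x) /\
  (forall x, add (opp x) x = zero) /\
  (forall a b x, smul (scal_mul k a b) x = smul a (smul b x)) /\
  (forall x, smul (scal_one k) x = x) /\
  (forall a x y, smul a (add x y) = add (smul a x) (smul a y)) /\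
  (forall a b x, smul (scal_add k a b) x = add (smul a x) (smul b x)).

Definition is_topology : Prop :=
  is_open (fun _ => True) /\
  (forall U V, is_open U -> is_open V -> is_open (fun x => U x /\ V x)) /\
  (forall F : (E -> Prop) -> Prop,
      (forall U, F U -> is_open U) -> is_open (fun x => exists U, F U /\ U x)).

Definition is_hausdorff : Prop :=
  forall x y, x <> y ->
    exists U V, is_open U /\ is_open V /\ U x /\ V y /\
                (forall z, U z -> V z -> False).

Definition add_continuous : Prop :=
  forall x y W, is_open W -> W (add x y) ->
    exists U V, is_open U /\ is_open V /\ U x /\ V y /\
                (forall u v, U u -> V v -> W (add u v)).

Definition smul_continuous : Prop :=
  forall (a : scal k) x W, is_open W -> W (smul a x) ->
    exists d U, 0 < d /\ is_open U /\ U x /\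
      (forall (b : scal k) u,
          scal_abs k (scal_add k b (scal_opp k a)) < d -> U u -> W (smul b u)).

Definition is_tvs : Prop :=
  is_vector_space /\ is_topology /\ is_hausdorff /\
  add_continuous /\ smul_continuous.

Definition is_p_norm (p : R) (N : E -> R) : Prop :=
  (forall x, 0 <= N x) /\
  (forall x, N x = 0 <-> x = zero) /\
  (forall a x, N (smul a x) = powp (scal_abs k a) p * N x) /\
  (forall x y, N (add x y) <= N x + N y).

Definition topology_generated_by (N : E -> R) : Prop :=
  forall U, is_open U <->
    (forall x, U x -> exists eps, 0 < eps /\ forall y, N (sub y x) < eps -> U y).

Definition p_normed : Prop :=
  exists p N, 0 < p /\ p <= 1 /\ is_p_norm p N /\ topology_generated_by N.

Definition bounded (B : E -> Prop) : Prop :=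
  forall U, is_open U -> U zero ->
    exists s, 0 < s /\
      forall t, s < t -> forall b, B b -> exists u, U u /\ b = smul (scal_ofR k t) u.

Definition fundamental_sequence_of_bounded_sets (Bn : nat -> E -> Prop) : Prop :=
  (forall n, bounded (Bn n)) /\
  (forall B, bounded B -> exists n, forall x, B x -> Bn n x).

Definition has_fundamental_sequence_of_bounded_sets : Prop :=
  exists Bn, fundamental_sequence_of_bounded_sets Bn.

Definition in_closure (A : E -> Prop) (x : E) : Prop :=
  forall U, is_open U -> U x -> exists y, U y /\ A y.

Definition seq_converges (s : nat -> E) (x : E) : Prop :=
  forall U, is_open U -> U x -> exists n0, forall n, (n0 <= n)%nat -> U (s n).

Definition frechet_urysohn : Prop :=
  forall (A : E -> Prop) x, in_closure A x ->
    exists s : nat -> E, (forall n, A (s n)) /\ seq_converges s x.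

End TVS.

(* Main.v *)
Require Import Defs.
From Stdlib Require Import Reals Lra Lia Psatz ClassicalEpsilon FunctionalExtensionality PropExtensionality List Permutation ZArith.
Open Scope R_scope.

Definition zs (k : field_choice) : scal k := scal_ofR k 0.

Lemma sa_zs_r k (a : scal k) : scal_add k a (scal_opp k (zs k)) = a.
Proof. destruct k; simpl in *; unfold zs; simpl.
- ring.
- destruct a; simpl; f_equal; ring. Qed.

Lemma abs_ofR k t : scal_abs k (scal_ofR k t) = Rabs t.
Proof. destruct k; simpl; auto.
replace (t*t+0*0) with (Rsqr t) by (unfold Rsqr; ring). apply sqrt_Rsqr_abs. Qed.

Lemma abs_nonneg k (a : scal k) : 0 <= scal_abs k a.
Proof. destruct k; simpl. apply Rabs_pos. apply sqrt_pos. Qed.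

Lemma abs_mul k (a b : scal k) : scal_abs k (scal_mul k a b) = scal_abs k a * scal_abs k b.
Proof. destruct k; simpl. apply Rabs_mult.
destruct a as [a1 a2], b as [b1 b2]; simpl.
rewrite <- sqrt_mult_alt by nra. f_equal. ring. Qed.

Lemma abs_sub_self k (a : scal k) : scal_abs k (scal_add k a (scal_opp k a)) = 0.
Proof. destruct k; simpl. replace (a + - a) with 0 by ring. apply Rabs_R0.
destruct a; simpl. replace ((r + - r) * (r + - r) + (r0 + - r0) * (r0 + - r0)) with 0 by ring. apply sqrt_0. Qed.

Lemma abs_zero k (a : scal k) : scal_abs k a = 0 -> a = zs k.
Proof. destruct k; simpl; unfold zs; simpl; intro H.
- destruct (Req_dec a 0); auto. exfalso. apply Rabs_no_R0 in H0. auto.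
- destruct a as [a1 a2]; simpl in *. apply sqrt_eq_0 in H; [|nra].
  f_equal; nra. Qed.

Lemma mul_comm k (a b : scal k) : scal_mul k a b = scal_mul k b a.
Proof. destruct k; simpl. ring. destruct a, b; simpl; f_equal; ring. Qed.

Lemma mul_assoc k (a b c : scal k) : scal_mul k a (scal_mul k b c) = scal_mul k (scal_mul k a b) c.
Proof. destruct k; simpl. ring. destruct a, b, c; simpl; f_equal; ring. Qed.

Lemma ofR_mul k s t : scal_mul k (scal_ofR k s) (scal_ofR k t) = scal_ofR k (s*t).
Proof. destruct k; simpl; auto. f_equal; ring. Qed.

Lemma one_ofR k : scal_one k = scal_ofR k 1.
Proof. destruct k; reflexivity. Qed.

Lemma zs_add k : scal_add k (zs k) (zs k) = zs k.
Proof. destruct k; unfold zs; simpl. ring. f_equal; ring. Qed.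

Lemma one_opp_add k : scal_add k (scal_one k) (scal_opp k (scal_one k)) = zs k.
Proof. destruct k; unfold zs; simpl. ring. f_equal; ring. Qed.

Lemma abs_one k : scal_abs k (scal_one k) = 1.
Proof. rewrite one_ofR, abs_ofR. apply Rabs_R1. Qed.

Lemma abs_zs k : scal_abs k (zs k) = 0.
Proof. unfold zs. rewrite abs_ofR. apply Rabs_R0. Qed.

Lemma scal_inv k (a : scal k) : a <> zs k ->
  exists a', scal_mul k a' a = scal_one k.
Proof. destruct k; simpl; unfold zs; simpl; intro H.
- exists (/ a). field. auto.
- destruct a as [a1 a2]. assert (a1*a1+a2*a2 <> 0).
  { intro H0. apply H. f_equal; nra. }
  exists (a1/(a1*a1+a2*a2), - a2/(a1*a1+a2*a2)). simpl. f_equal; field; auto. Qed.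

Lemma mul_one_l k (a : scal k) : scal_mul k (scal_one k) a = a.
Proof. destruct k; simpl. ring. destruct a; simpl; f_equal; ring. Qed.

Section V.
Variables (k : field_choice) (E : Type) (add : E -> E -> E) (zero : E) (opp : E -> E)
  (smul : scal k -> E -> E) (is_open : (E -> Prop) -> Prop).
Hypothesis HE : is_tvs k E add zero opp smul is_open.

Lemma v_assoc x y z : add x (add y z) = add (add x y) z.
Proof. destruct HE as ((h&_)&_). apply h. Qed.
Lemma v_comm x y : add x y = add y x.
Proof. destruct HE as ((_&h&_)&_). apply h. Qed.
Lemma v_0l x : add zero x = x.
Proof. destruct HE as ((_&_&h&_)&_). apply h. Qed.
Lemma v_oppl x : add (opp x) x = zero.
Proof. destruct HE as ((_&_&_&h&_)&_). apply h. Qed.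
Lemma v_smul_mul a b x : smul (scal_mul k a b) x = smul a (smul b x).
Proof. destruct HE as ((_&_&_&_&h&_)&_). apply h. Qed.
Lemma v_smul_one x : smul (scal_one k) x = x.
Proof. destruct HE as ((_&_&_&_&_&h&_)&_). apply h. Qed.
Lemma v_smul_add a x y : smul a (add x y) = add (smul a x) (smul a y).
Proof. destruct HE as ((_&_&_&_&_&_&h&_)&_). apply h. Qed.
Lemma v_sadd_smul a b x : smul (scal_add k a b) x = add (smul a x) (smul b x).
Proof. destruct HE as ((_&_&_&_&_&_&_&h)&_). apply h. Qed.

Lemma t_top : is_topology E is_open.
Proof. destruct HE as (_&h&_). exact h. Qed.
Lemma t_hausdorff : is_hausdorff E is_open.
Proof. destruct HE as (_&_&h&_). exact h. Qed.
Lemma t_add : add_continuous E add is_open.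
Proof. destruct HE as (_&_&_&h&_). exact h. Qed.
Lemma t_smul : smul_continuous k E smul is_open.
Proof. destruct HE as (_&_&_&_&h). exact h. Qed.

Lemma open_True : is_open (fun _ => True).
Proof. destruct t_top as (h&_). exact h. Qed.
Lemma open_inter U V : is_open U -> is_open V -> is_open (fun x => U x /\ V x).
Proof. destruct t_top as (_&h&_). apply h. Qed.
Lemma open_union (F : (E -> Prop) -> Prop) :
  (forall U, F U -> is_open U) -> is_open (fun x => exists U, F U /\ U x).
Proof. destruct t_top as (_&_&h). apply h. Qed.

Lemma v_0r x : add x zero = x.
Proof. rewrite v_comm. apply v_0l. Qed.
Lemma v_oppr x : add x (opp x) = zero.
Proof. rewrite v_comm. apply v_oppl. Qed.

Lemma v_cancel_l a x y : add a x = add a y -> x = y.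
Proof. intro H. rewrite <- (v_0l x), <- (v_0l y), <- (v_oppl a), <- !v_assoc, H. auto. Qed.

Lemma v_idem x : add x x = x -> x = zero.
Proof. intro H. apply (v_cancel_l x). rewrite H, v_0r. auto. Qed.

Lemma smul_zs x : smul (zs k) x = zero.
Proof. apply v_idem. rewrite <- v_sadd_smul, zs_add. auto. Qed.

Lemma smul_zero a : smul a zero = zero.
Proof. apply v_idem. rewrite <- v_smul_add, v_0l. auto. Qed.

Lemma opp_smul x : opp x = smul (scal_opp k (scal_one k)) x.
Proof. apply (v_cancel_l x). rewrite v_oppr.
 rewrite <- (v_smul_one x) at 1. rewrite <- v_sadd_smul, one_opp_add, smul_zs. auto. Qed.

Lemma opp_zero : opp zero = zero.
Proof. rewrite opp_smul. apply smul_zero. Qed.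

Lemma sub_self x : sub E add opp x x = zero.
Proof. unfold sub. apply v_oppr. Qed.

Lemma sub_zero x : sub E add opp x zero = x.
Proof. unfold sub. rewrite opp_zero. apply v_0r. Qed.

Lemma add_sub x y : add x (sub E add opp y x) = y.
Proof. unfold sub. rewrite (v_comm y), v_assoc, v_oppr, v_0l. auto. Qed.

Lemma sub_add x y : sub E add opp (add x y) x = y.
Proof. unfold sub. rewrite (v_comm x y), <- v_assoc, v_oppr, v_0r. auto. Qed.

Lemma smul_ofR_inv t x : t <> 0 -> smul (scal_ofR k t) (smul (scal_ofR k (/t)) x) = x.
Proof. intro H. rewrite <- v_smul_mul, ofR_mul, Rinv_r, <- one_ofR, v_smul_one; auto. Qed.

Lemma smul_comm a b x : smul a (smul b x) = smul b (smul a x).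
Proof. rewrite <- !v_smul_mul, mul_comm. auto. Qed.

Lemma opp_add x y : opp (add x y) = add (opp x) (opp y).
Proof. rewrite !opp_smul. apply v_smul_add. Qed.

Lemma sub_split z y x : sub E add opp z x = add (sub E add opp z y) (sub E add opp y x).
Proof. unfold sub. rewrite <- v_assoc, (v_assoc (opp y)), v_oppl, v_0l. auto. Qed.

Lemma smul_sub a x y : smul a (sub E add opp x y) = sub E add opp (smul a x) (smul a y).
Proof. unfold sub. rewrite v_smul_add, !opp_smul, smul_comm. auto. Qed.


Notation bnd := (Defs.bounded k E zero smul is_open).
Notation subv := (sub E add opp).

Lemma BAL U : is_open U -> U zero -> exists d U', 0 < d /\ is_open U' /\ U' zero /\
  forall b u, scal_abs k b < d -> U' u -> U (smul b u).
Proof. intros HU H0. destruct (t_smul (zs k) zero U HU) as (d & U' & Hd & HU' & H0' & H).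
 rewrite smul_zero; auto.
 exists d, U'. repeat split; auto. intros b u Hb Hu. apply H; auto. rewrite sa_zs_r; auto. Qed.

Lemma ABS x U : is_open U -> U zero -> exists s, 0 < s /\ forall t, s < t ->
  exists u, U u /\ x = smul (scal_ofR k t) u.
Proof. intros HU H0. destruct (t_smul (zs k) x U HU) as (d & P & Hd & HP & Px & H).
 rewrite smul_zs; auto.
 exists (2/d). split. apply Rdiv_lt_0_compat; lra. intros t Ht.
 assert (Ht0 : 0 < t). { assert (0 < 2/d) by (apply Rdiv_lt_0_compat; lra). lra. }
 exists (smul (scal_ofR k (/t)) x). split.
 - apply H; auto. rewrite sa_zs_r, abs_ofR, Rabs_right.
   + apply (Rmult_lt_reg_l t); auto. rewrite Rinv_r by lra.
     apply (Rmult_lt_reg_r (/d)). apply Rinv_0_lt_compat; auto.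
     rewrite Rmult_assoc, Rinv_r, Rmult_1_l, Rmult_1_r by lra. unfold Rdiv in Ht. lra.
   + left. apply Rinv_0_lt_compat; auto.
 - rewrite smul_ofR_inv; auto. lra. Qed.

Lemma SMALL B U : bnd B -> is_open U -> U zero -> exists del, 0 < del /\
  forall b u, scal_abs k b <= del -> B u -> U (smul b u).
Proof. intros HB HU H0. destruct (BAL U HU H0) as (d & U' & Hd & HU' & H0' & H).
 destruct (HB U' HU' H0') as (s & Hs & Hs').
 exists (d / (2*(s+1))). split. apply Rdiv_lt_0_compat; lra.
 intros b u Hb Hu. destruct (Hs' (s+1) ltac:(lra) u Hu) as (u' & Hu' & ->).
 rewrite <- v_smul_mul. apply H; auto. rewrite abs_mul, abs_ofR, Rabs_right by lra.
 apply Rle_lt_trans with (d / (2 * (s + 1)) * (s+1)). apply Rmult_le_compat_r; lra.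
 field_simplify; lra. Qed.

Lemma ADD00 U : is_open U -> U zero -> exists U1 U2, is_open U1 /\ is_open U2 /\ U1 zero /\ U2 zero /\
  forall u v, U1 u -> U2 v -> U (add u v).
Proof. intros HU H0. destruct (t_add zero zero U HU) as (U1 & U2 & h1 & h2 & h3 & h4 & h5).
 rewrite v_0l; auto. exists U1, U2; auto. Qed.

Lemma bnd_sub A B : bnd B -> (forall x, A x -> B x) -> bnd A.
Proof. intros HB HAB U HU H0. destruct (HB U HU H0) as (s & Hs & H). exists s; split; [exact Hs|].
 intros t Ht b Hb. apply H; auto. Qed.

Lemma bnd_union A B : bnd A -> bnd B -> bnd (fun x => A x \/ B x).
Proof. intros HA HB U HU H0. destruct (HA U HU H0) as (s1 & Hs1 & H1).
 destruct (HB U HU H0) as (s2 & Hs2 & H2). exists (Rmax s1 s2). split.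
 apply Rlt_le_trans with s1; auto; apply Rmax_l.
 intros t Ht b [Hb|Hb]. apply H1; auto. apply Rle_lt_trans with (Rmax s1 s2); auto; apply Rmax_l.
 apply H2; auto. apply Rle_lt_trans with (Rmax s1 s2); auto; apply Rmax_r. Qed.

Lemma bnd_diff A B : bnd A -> bnd B -> bnd (fun x => exists a b, A a /\ B b /\ x = subv a b).
Proof. intros HA HB U HU H0. destruct (ADD00 U HU H0) as (U1 & U2 & o1 & o2 & z1 & z2 & H12).
 destruct (t_smul (scal_opp k (scal_one k)) zero U2 o2) as (d & U3 & Hd & o3 & z3 & H3).
 rewrite smul_zero; auto.
 destruct (HA U1 o1 z1) as (s1 & Hs1 & G1). destruct (HB U3 o3 z3) as (s2 & Hs2 & G2).
 exists (Rmax s1 s2). split. apply Rlt_le_trans with s1; auto; apply Rmax_l.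
 intros t Ht x (a & b & Ha & Hb & ->).
 destruct (G1 t ltac:(apply Rle_lt_trans with (Rmax s1 s2); auto; apply Rmax_l) a Ha) as (e1 & He1 & ->).
 destruct (G2 t ltac:(apply Rle_lt_trans with (Rmax s1 s2); auto; apply Rmax_r) b Hb) as (e3 & He3 & ->).
 exists (add e1 (smul (scal_opp k (scal_one k)) e3)). split.
 - apply H12; auto. apply H3; auto. rewrite abs_sub_self; auto.
 - unfold sub. rewrite v_smul_add, opp_smul, smul_comm. auto. Qed.

Lemma bnd_seq (s : nat -> E) : seq_converges E is_open s zero -> bnd (fun x => exists i, x = s i).
Proof. intros Hs U HU H0.
 assert (Hfin : forall n, exists S, 0 < S /\ forall i, (i < n)%nat -> forall t, S < t ->
    exists u, U u /\ s i = smul (scal_ofR k t) u).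
 { induction n.
   - exists 1. split. lra. intros; lia.
   - destruct IHn as (S & HS & HSi). destruct (ABS (s n) U HU H0) as (S' & HS' & H').
     exists (Rmax S S'). split. apply Rlt_le_trans with S; auto; apply Rmax_l.
     intros i Hi t Ht. destruct (Nat.eq_dec i n) as [->|Hne].
     + apply H'. apply Rle_lt_trans with (Rmax S S'); auto; apply Rmax_r.
     + apply HSi. lia. apply Rle_lt_trans with (Rmax S S'); auto; apply Rmax_l. }
 destruct (BAL U HU H0) as (d & U' & Hd & HU' & H0' & HB).
 destruct (Hs U' HU' H0') as (i0 & Hi0).
 destruct (Hfin i0) as (S & HS & HSi).
 exists (Rmax S (2/d)). split. apply Rlt_le_trans with S; auto; apply Rmax_l.
 intros t Ht x (i & ->). destruct (lt_dec i i0) as [Hl|Hl].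
 - apply HSi; auto. apply Rle_lt_trans with (Rmax S (2/d)); auto; apply Rmax_l.
 - assert (Ht2 : 2/d < t) by (apply Rle_lt_trans with (Rmax S (2/d)); auto; apply Rmax_r).
   assert (0 < 2/d) by (apply Rdiv_lt_0_compat; lra).
   exists (smul (scal_ofR k (/t)) (s i)). split.
   + apply HB. rewrite abs_ofR, Rabs_right.
     * apply (Rmult_lt_reg_l t). lra. rewrite Rinv_r by lra.
       apply (Rmult_lt_reg_r (/d)). apply Rinv_0_lt_compat; auto.
       rewrite Rmult_assoc, Rinv_r, Rmult_1_l, Rmult_1_r by lra. unfold Rdiv in Ht2. lra.
     * left. apply Rinv_0_lt_compat; lra.
     * apply Hi0. lia.
   + rewrite smul_ofR_inv; auto. lra. Qed.


Lemma nat_choice {A : Type} (P : nat -> A -> Prop) : (forall n, exists y, P n y) ->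
  exists f : nat -> A, forall n, P n (f n).
Proof. intro H. exists (fun n => proj1_sig (constructive_indefinite_description _ (H n))).
 intro n. exact (proj2_sig (constructive_indefinite_description _ (H n))). Qed.

Lemma open_fin_inter (U : nat -> E -> Prop) : (forall n, is_open (U n)) ->
  forall m, is_open (fun x => forall n, (n < m)%nat -> U n x).
Proof. intros HU m. induction m.
 - replace (fun x : E => forall n, (n < 0)%nat -> U n x) with (fun _ : E => True).
   apply open_True. apply functional_extensionality; intro x. apply propositional_extensionality.
   split; auto; intros; lia.
 - replace (fun x : E => forall n, (n < S m)%nat -> U n x) with
     (fun x => (fun x => forall n, (n < m)%nat -> U n x) x /\ U m x).
   apply open_inter; auto. apply functional_extensionality; intro x. apply propositional_extensionality.
   split. intros [H1 H2] n Hn. destruct (Nat.eq_dec n m) as [->|]; auto. apply H1; lia.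
   intro H; split; auto. Qed.

Lemma inv_lt_archi d : 0 < d -> exists n0, forall n, (n0 <= n)%nat -> / (INR n + 1) < d.
Proof. intro Hd. destruct (archimed (/d)) as [H1 _].
 exists (Z.to_nat (up (/d))). intros n Hn.
 assert (Hpos : 0 < / d) by (apply Rinv_0_lt_compat; auto).
 assert (IZR (up (/d)) <= INR n).
 { rewrite INR_IZR_INZ. apply IZR_le. assert (0 <= up (/d))%Z.
   { apply le_IZR. lra. } lia. }
 rewrite <- (Rinv_inv d). apply Rinv_lt_contravar. apply Rmult_lt_0_compat; auto.
 pose proof (pos_INR n); lra. lra. Qed.

Lemma STEP1 : frechet_urysohn E is_open ->
  has_fundamental_sequence_of_bounded_sets k E zero smul is_open ->
  exists U0, is_open U0 /\ U0 zero /\ bnd U0.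
Proof. intros HFU [Bn [HBn HBf]].
 destruct (classic (exists U0, is_open U0 /\ U0 zero /\ bnd U0)) as [|NOB]; auto. exfalso.
 assert (NB : forall B, bnd B -> forall U, is_open U -> U zero -> exists x, U x /\ ~ B x).
 { intros B HB U HU H0. destruct (classic (exists x, U x /\ ~ B x)) as [|Hn]; auto.
   exfalso. apply NOB. exists U. repeat split; auto. apply (bnd_sub U B HB).
   intros x Hx. destruct (classic (B x)); auto. exfalso; apply Hn; eauto. }
 assert (Hw : exists w, w <> zero).
 { destruct (classic (exists w, w <> zero)) as [|Hn]; auto. exfalso. apply NOB.
   exists (fun _ => True). repeat split. apply open_True.
   intros U HU H0. exists 1. split. lra. intros t Ht b _. exists zero. split; auto.
   rewrite smul_zero. destruct (classic (b = zero)); auto. exfalso; apply Hn; eauto. }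
 destruct Hw as [w Hw].
 set (v := fun n : nat => smul (scal_ofR k (/ (INR n + 1))) w).
 assert (Hn1 : forall n : nat, 0 < INR n + 1) by (intro n; pose proof (pos_INR n); lra).
 assert (vconv : seq_converges E is_open v zero).
 { intros U HU H0. destruct (t_smul (zs k) w U HU) as (d & P & Hd & HP & Pw & H).
   rewrite smul_zs; auto.
   destruct (inv_lt_archi d Hd) as [n0 Hn0]. exists n0. intros n Hn. unfold v. apply H; auto.
   rewrite sa_zs_r, abs_ofR, Rabs_right. auto. left. apply Rinv_0_lt_compat; auto. }
 assert (vne : forall n, v n <> zero).
 { intros n Hv. apply Hw. rewrite <- (smul_ofR_inv (INR n + 1) w).
   fold (v n). rewrite Hv. apply smul_zero. specialize (Hn1 n); lra. }
 set (B' := fun n x => exists i, (i <= n)%nat /\ Bn i x).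
 assert (HB' : forall n, bnd (B' n)).
 { induction n.
   - apply (bnd_sub _ (Bn 0%nat) (HBn 0%nat)). intros x (i & Hi & Hx).
     replace i with 0%nat in Hx by lia. auto.
   - apply (bnd_sub _ _ (bnd_union _ _ IHn (HBn (S n)))). intros x (i & Hi & Hx).
     destruct (Nat.eq_dec i (S n)) as [->|]; auto. left. exists i. split; auto. lia. }
 set (Cn := fun n x => exists a b, B' n a /\ B' n b /\ x = subv a b).
 assert (HCn : forall n, bnd (Cn n)) by (intro n; apply bnd_diff; auto).
 destruct (HBf _ (bnd_seq v vconv)) as [M0 HM0].
 assert (vB : forall n, (M0 <= n)%nat -> B' n (v n)).
 { intros n Hn. exists M0. split; auto. apply HM0. eauto. }
 assert (HH : forall n, exists UV : (E -> Prop) * (E -> Prop),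
   is_open (fst UV) /\ is_open (snd UV) /\ fst UV zero /\ snd UV (v n) /\
   forall z, fst UV z -> snd UV z -> False).
 { intro n. destruct (t_hausdorff zero (v n)) as (U & V & h1 & h2 & h3 & h4 & h5).
   intro Heq; apply (vne n); auto. exists (U, V); simpl; auto. }
 destruct (nat_choice _ HH) as [UV HUV].
 set (A := fun y => exists n, (M0 <= n)%nat /\ snd (UV n) y /\ ~ Cn n (subv y (v n))).
 assert (Acl : in_closure E is_open A zero).
 { intros U HU H0. destruct (ADD00 U HU H0) as (U1 & U2 & o1 & o2 & z1 & z2 & H12).
   destruct (vconv U1 o1 z1) as [n0 Hn0].
   set (n := Nat.max n0 M0).
   destruct (HUV n) as (oU & oV & zU & vV & disj).
   destruct (t_add (v n) zero (snd (UV n)) oV) as (P & Q & oP & oQ & Pv & Qz & HPQ).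
   rewrite v_0r; auto.
   destruct (NB (Cn n) (HCn n) (fun x => Q x /\ U2 x) (open_inter _ _ oQ o2) (conj Qz z2))
     as (x & [Qx U2x] & nC).
   exists (add (v n) x). split.
   - apply H12; auto. apply Hn0. lia.
   - exists n. split. lia. split. apply HPQ; auto. rewrite sub_add. auto. }
 destruct (HFU A zero Acl) as (s & sA & sconv).
 destruct (HBf _ (bnd_seq s sconv)) as [m Hm].
 assert (oS : is_open (fun x => forall n, (n < m)%nat -> fst (UV n) x)).
 { apply open_fin_inter. intro n. apply (HUV n). }
 destruct (sconv _ oS) as [i0 Hi0]. { intros n _. apply (HUV n). }
 specialize (Hi0 i0 (le_n _)).
 destruct (sA i0) as (n & Hn & Vs & nC).
 destruct (lt_dec n m) as [Hl|Hl].
 - destruct (HUV n) as (_ & _ & _ & _ & disj). apply (disj (s i0)); auto.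
 - apply nC. exists (s i0), (v n). repeat split; auto.
   exists m. split. lia. apply Hm. eauto. Qed.


Section P.
Variable U0 : E -> Prop.
Hypotheses (oU0 : is_open U0) (zU0 : U0 zero) (bU0 : bnd U0).

Definition Mx x t := exists b u, scal_abs k b <= t /\ U0 u /\ x = smul b u.

Lemma M_scale a x t : Mx x t -> Mx (smul a x) (scal_abs k a * t).
Proof. intros (b & u & Hb & Hu & ->). exists (scal_mul k a b), u. split; [|split; auto].
 rewrite abs_mul. apply Rmult_le_compat_l; auto. apply abs_nonneg. rewrite v_smul_mul; auto. Qed.

Lemma M_mono x t t' : Mx x t -> t <= t' -> Mx x t'.
Proof. intros (b & u & Hb & Hu & ->) H. exists b, u. split; auto. lra. Qed.

Lemma M_zero t : 0 <= t -> Mx zero t.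
Proof. intro H. exists (zs k), zero. rewrite abs_zs, smul_zs. auto. Qed.

Lemma M0_eq x : Mx x 0 -> x = zero.
Proof. intros (b & u & Hb & Hu & ->). pose proof (abs_nonneg k b).
 rewrite (abs_zero k b) by lra. apply smul_zs. Qed.

Lemma M_abs x : exists t, 0 < t /\ Mx x t.
Proof. destruct (ABS x U0 oU0 zU0) as (s & Hs & H).
 destruct (H (s+1) ltac:(lra)) as (u & Hu & ->). exists (s+1). split. lra.
 exists (scal_ofR k (s+1)), u. rewrite abs_ofR, Rabs_right by lra. split; auto. lra. Qed.

Lemma M_small U : is_open U -> U zero -> exists del, 0 < del /\
  forall x t, t <= del -> Mx x t -> U x.
Proof. intros HU H0. destruct (SMALL U0 U bU0 HU H0) as (del & Hd & H).
 exists del. split; auto. intros x t Ht (b & u & Hb & Hu & ->). apply H; auto. lra. Qed.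

Lemma M_tri : exists C, 2 <= C /\ forall x y t, 0 <= t -> Mx x t -> Mx y t -> Mx (add x y) (C*t).
Proof. destruct (ADD00 U0 oU0 zU0) as (U1 & U2 & o1 & o2 & z1 & z2 & H12).
 destruct (SMALL U0 U1 bU0 o1 z1) as (d1 & Hd1 & G1).
 destruct (SMALL U0 U2 bU0 o2 z2) as (d2 & Hd2 & G2).
 set (d := Rmin (Rmin d1 d2) (1/2)).
 assert (Hd : 0 < d) by (unfold d; repeat apply Rmin_glb_lt; lra).
 assert (dd1 : d <= d1) by (unfold d; eapply Rle_trans; [apply Rmin_l|apply Rmin_l]).
 assert (dd2 : d <= d2) by (unfold d; eapply Rle_trans; [apply Rmin_l|apply Rmin_r]).
 assert (dh : d <= 1/2) by (unfold d; apply Rmin_r).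
 exists (/d). split.
 { replace 2 with (/(1/2)) by field. apply Rinv_le_contravar; auto. }
 intros x y t Ht Hx Hy. destruct (Req_dec t 0) as [->|Htn].
 { rewrite (M0_eq x Hx), (M0_eq y Hy), v_0l. apply M_zero. lra. }
 assert (Htp : 0 < t) by lra.
 destruct Hx as (b1 & u1 & Hb1 & Hu1 & ->). destruct Hy as (b2 & u2 & Hb2 & Hu2 & ->).
 exists (scal_ofR k (t/d)), (add (smul (scal_ofR k (d/t)) (smul b1 u1)) (smul (scal_ofR k (d/t)) (smul b2 u2))).
 split; [|split].
 - rewrite abs_ofR, Rabs_right. unfold Rdiv; lra. left; apply Rdiv_lt_0_compat; auto.
 - rewrite <- !v_smul_mul. apply H12.
   + apply G1; auto. rewrite abs_mul, abs_ofR, Rabs_right by (left; apply Rdiv_lt_0_compat; auto).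
     apply Rle_trans with (d/t * t). apply Rmult_le_compat_l; auto. left; apply Rdiv_lt_0_compat; auto.
     field_simplify; lra.
   + apply G2; auto. rewrite abs_mul, abs_ofR, Rabs_right by (left; apply Rdiv_lt_0_compat; auto).
     apply Rle_trans with (d/t * t). apply Rmult_le_compat_l; auto. left; apply Rdiv_lt_0_compat; auto.
     field_simplify; lra.
 - rewrite v_smul_add, <- !v_smul_mul, !ofR_mul.
   replace (t / d * (d / t)) with 1 by (field; lra). rewrite <- one_ofR, !mul_one_l. auto. Qed.

Lemma M_nbhd t x : 0 < t -> exists P, is_open P /\ P x /\ forall y, P y -> Mx (subv y x) t.
Proof. intro Ht.
 destruct (t_smul (scal_ofR k (/t)) zero U0 oU0) as (d & Q & Hd & oQ & Qz & HQ).
 rewrite smul_zero; auto.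
 destruct (t_add x (opp x) Q oQ) as (P & P' & oP & oP' & Px & P'x & HPP).
 rewrite v_oppr; auto.
 exists P. repeat split; auto. intros y Py.
 exists (scal_ofR k t), (smul (scal_ofR k (/t)) (subv y x)). split; [|split].
 - rewrite abs_ofR, Rabs_right; lra.
 - apply HQ. rewrite abs_sub_self; auto. apply HPP; auto.
 - rewrite smul_ofR_inv; auto. lra. Qed.

Lemma M_zero_all x : (forall t, 0 < t -> Mx x t) -> x = zero.
Proof. intro H. destruct (classic (x = zero)) as [|Hn]; auto. exfalso.
 destruct (t_hausdorff zero x) as (U & V & oU & oV & Uz & Vx & disj). auto.
 destruct (M_small U oU Uz) as (del & Hd & G).
 apply (disj x); auto. apply (G x del). lra. apply H; auto. Qed.


Section Q.
Variable C : R.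
Hypothesis HC2 : 2 <= C.
Hypothesis HCtri : forall x y t, 0 <= t -> Mx x t -> Mx y t -> Mx (add x y) (C*t).

Definition LC := ln C.
Definition lv (m : Z) := exp (- IZR m * LC).
Definition pw (m : Z) := exp (- IZR m * ln 2).

Lemma LC_pos : 0 < LC.
Proof. unfold LC. rewrite <- ln_1. apply ln_increasing; lra. Qed.

Lemma ln2_pos : 0 < ln 2.
Proof. rewrite <- ln_1. apply ln_increasing; lra. Qed.

Lemma lv_pos m : 0 < lv m.
Proof. apply exp_pos. Qed.
Lemma pw_pos m : 0 < pw m.
Proof. apply exp_pos. Qed.

Lemma lv_pred m : lv (m - 1) = C * lv m.
Proof. unfold lv. rewrite minus_IZR. replace (- (IZR m - 1) * LC) with (LC + - IZR m * LC) by ring.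
 rewrite exp_plus. unfold LC. rewrite exp_ln; auto. lra. Qed.

Lemma pw_pred m : pw (m - 1) = 2 * pw m.
Proof. unfold pw. rewrite minus_IZR. replace (- (IZR m - 1) * ln 2) with (ln 2 + - IZR m * ln 2) by ring.
 rewrite exp_plus. rewrite exp_ln; auto. lra. Qed.

Lemma pw_lt_inv m n : pw m < pw n -> (n < m)%Z.
Proof. unfold pw. intro H. apply exp_lt_inv in H. pose proof ln2_pos.
 apply lt_IZR. nra. Qed.

Lemma pw_le m n : (n <= m)%Z -> pw m <= pw n.
Proof. intro H. unfold pw. apply IZR_le in H. pose proof ln2_pos.
 destruct (Req_dec (IZR n) (IZR m)) as [e|]. rewrite e; lra.
 left. apply exp_increasing. nra. Qed.

Lemma lv_le m n : (n <= m)%Z -> lv m <= lv n.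
Proof. intro H. unfold lv. apply IZR_le in H. pose proof LC_pos.
 destruct (Req_dec (IZR n) (IZR m)) as [e|]. rewrite e; lra.
 left. apply exp_increasing. nra. Qed.

Lemma M_lev_add x y m : Mx x (lv m) -> Mx y (lv m) -> Mx (add x y) (lv (m - 1)).
Proof. intros. rewrite lv_pred. apply HCtri; auto. left; apply lv_pos. Qed.

Definition sumL (l : list (E * Z)) := fold_right (fun e s => add (fst e) s) zero l.
Definition wL (l : list (E * Z)) := fold_right (fun e s => pw (snd e) + s) 0 l.

Lemma sumL_perm l l' : Permutation l l' -> sumL l = sumL l'.
Proof. induction 1; simpl; auto.
 - rewrite IHPermutation; auto.
 - rewrite !v_assoc, (v_comm (fst y)). auto.
 - congruence. Qed.

Lemma wL_perm l l' : Permutation l l' -> wL l = wL l'.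
Proof. induction 1; simpl; auto.
 - rewrite IHPermutation; auto.
 - ring.
 - congruence. Qed.

Lemma wL_nonneg l : 0 <= wL l.
Proof. induction l; simpl. lra. pose proof (pw_pos (snd a)). lra. Qed.

Lemma extract_min (l : list (E * Z)) : l <> nil -> exists e r, Permutation l (e :: r) /\
  forall e', In e' r -> (snd e <= snd e')%Z.
Proof. induction l as [|x t IH]; intro Hne. congruence.
 destruct t as [|y t'].
 - exists x, nil. split; auto. intros _ [].
 - destruct IH as (e & r & Hp & Hm). discriminate.
   destruct (Z_le_dec (snd x) (snd e)).
   + exists x, (y :: t'). split; auto. intros e' He'.
     apply (Permutation_in _ Hp) in He'. destruct He' as [<-|He']; auto.
     specialize (Hm e' He'). lia.
   + exists e, (x :: r). split.
     * eapply perm_trans. apply perm_skip. exact Hp. apply perm_swap.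
     * intros e' [<-|He']. lia. auto. Qed.

Lemma dup_ex (l : list (E * Z)) : ~ NoDup (map snd l) ->
  exists e1 e2 r, Permutation l (e1 :: e2 :: r) /\ snd e1 = snd e2.
Proof. induction l as [|x t IH]; simpl; intro H. exfalso; apply H; constructor.
 destruct (classic (In (snd x) (map snd t))) as [Hin|Hnin].
 - apply in_map_iff in Hin. destruct Hin as (e2 & He2 & Hin).
   apply in_split in Hin. destruct Hin as (t1 & t2 & ->).
   exists x, e2, (t1 ++ t2). split; auto. apply perm_skip. apply Permutation_sym, Permutation_middle.
 - destruct IH as (e1 & e2 & r & Hp & He).
   { intro Hn. apply H. constructor; auto. }
   exists e1, e2, (x :: r). split; auto.
   eapply perm_trans. apply perm_skip. exact Hp.
   eapply perm_trans. apply perm_swap. apply perm_skip. apply perm_swap. Qed.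

Definition validL (l : list (E * Z)) := forall e, In e l -> Mx (fst e) (lv (snd e)).

Lemma lem_D : forall n l b, length l = n -> NoDup (map snd l) -> validL l ->
  (forall e, In e l -> (b <= snd e)%Z) -> Mx (sumL l) (lv (b - 1)) /\ wL l < pw (b - 1).
Proof. intro n. induction n as [n IH] using (well_founded_induction lt_wf).
 intros l b Hlen Hnd Hv Hb. destruct l as [|x t].
 { simpl. split. apply M_zero. left; apply lv_pos. apply pw_pos. }
 destruct (extract_min (x :: t)) as (e & r & Hp & Hm). discriminate.
 assert (Hnd' : NoDup (map snd (e :: r))).
 { eapply Permutation_NoDup. apply Permutation_map. exact Hp. auto. }
 simpl in Hnd'. apply NoDup_cons_iff in Hnd'. destruct Hnd' as [Hni Hnd'].
 assert (Hlr : length r = (n - 1)%nat).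
 { apply Permutation_length in Hp. simpl in Hp, Hlen. lia. }
 assert (Hinl : forall e', In e' r -> In e' (x :: t)).
 { intros e' He'. apply (Permutation_in _ (Permutation_sym Hp)). right; auto. }
 assert (Hel : In e (x :: t)). { apply (Permutation_in _ (Permutation_sym Hp)). left; auto. }
 destruct (IH (n - 1)%nat ltac:(simpl in Hlen; lia) r (snd e + 1)%Z Hlr Hnd')
   as [IH1 IH2].
 { intros e' He'. apply Hv. auto. }
 { intros e' He'. specialize (Hm e' He'). assert (snd e' <> snd e).
   { intro Heq. apply Hni. rewrite <- Heq. apply in_map; auto. } lia. }
 replace (snd e + 1 - 1)%Z with (snd e) in * by lia.
 rewrite (sumL_perm _ _ Hp), (wL_perm _ _ Hp). simpl.
 specialize (Hb e Hel). split.
 - apply M_mono with (lv (snd e - 1)). apply M_lev_add; auto. apply lv_le. lia.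
 - apply Rlt_le_trans with (pw (snd e - 1)). rewrite pw_pred. lra. apply pw_le. lia. Qed.

Lemma lem_Z : forall n l a, length l = n -> validL l ->
  (forall e, In e l -> (a <= snd e)%Z) -> wL l < pw (a - 1) -> Mx (sumL l) (lv (a - 1)).
Proof. intro n. induction n as [n IH] using (well_founded_induction lt_wf).
 intros l a Hlen Hv Ha Hw. destruct (classic (NoDup (map snd l))) as [Hnd|Hnd].
 { apply (lem_D n l a); auto. }
 destruct (dup_ex l Hnd) as (e1 & e2 & r & Hp & He).
 assert (Hin : forall e, In e (e1 :: e2 :: r) -> In e l).
 { intros e H. apply (Permutation_in _ (Permutation_sym Hp)). auto. }
 rewrite (wL_perm _ _ Hp) in Hw. simpl in Hw. rewrite He in Hw.
 assert (Hm : (a < snd e2)%Z).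
 { assert (pw (snd e2 - 1) < pw (a - 1)).
   { rewrite pw_pred. pose proof (wL_nonneg r). lra. }
   apply pw_lt_inv in H. lia. }
 set (l' := (add (fst e1) (fst e2), (snd e2 - 1)%Z) :: r).
 assert (Hlen' : length l' = (n - 1)%nat).
 { apply Permutation_length in Hp. simpl in Hp. unfold l'; simpl. lia. }
 assert (Hsum : sumL l = sumL l').
 { rewrite (sumL_perm _ _ Hp). unfold l'; simpl. apply v_assoc. }
 rewrite Hsum. apply (IH (n - 1)%nat).
 - assert (length l = length (e1 :: e2 :: r)) by (apply Permutation_length; auto).
   simpl in H. lia.
 - auto.
 - intros e [<-|H]. simpl. rewrite <- He. apply M_lev_add. apply Hv, Hin; left; auto.
   rewrite He. apply Hv, Hin; right; left; auto. apply Hv, Hin. right; right; auto.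
 - intros e [<-|H]. simpl. lia. apply Ha, Hin. right; right; auto.
 - unfold l'; simpl. rewrite pw_pred. lra. Qed.


Definition pp := ln 2 / LC.

Lemma pp_pos : 0 < pp.
Proof. unfold pp. apply Rdiv_lt_0_compat. apply ln2_pos. apply LC_pos. Qed.

Lemma pp_le1 : pp <= 1.
Proof. unfold pp. pose proof LC_pos. apply (Rmult_le_reg_r LC); auto. unfold Rdiv.
 rewrite Rmult_assoc, Rinv_l, Rmult_1_r, Rmult_1_l by lra. unfold LC.
 destruct (Req_dec C 2) as [->|]. lra. left. apply ln_increasing; lra. Qed.

Lemma powp_0 q : powp 0 q = 0.
Proof. unfold powp. destruct (Req_EM_T 0 0); auto. congruence. Qed.
Lemma powp_pos t q : 0 < t -> powp t q = exp (q * ln t).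
Proof. intro H. unfold powp. destruct (Req_EM_T t 0). lra. reflexivity. Qed.
Lemma powp_nonneg t q : 0 <= powp t q.
Proof. unfold powp. destruct (Req_EM_T t 0). lra. left; apply exp_pos. Qed.
Lemma powp_mul s t q : 0 <= s -> 0 <= t -> powp (s * t) q = powp s q * powp t q.
Proof. intros Hs Ht. destruct (Req_dec s 0) as [->|]. rewrite Rmult_0_l, powp_0. ring.
 destruct (Req_dec t 0) as [->|]. rewrite Rmult_0_r, powp_0. ring.
 rewrite !powp_pos by nra. rewrite ln_mult by lra. rewrite <- exp_plus. f_equal. ring. Qed.
Lemma powp_1 q : powp 1 q = 1.
Proof. rewrite powp_pos by lra. rewrite ln_1, Rmult_0_r. apply exp_0. Qed.

Definition sumR (l : list (E * R)) := fold_right (fun e s => add (fst e) s) zero l.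
Definition wR (l : list (E * R)) := fold_right (fun e s => powp (snd e) pp + s) 0 l.
Definition validR (l : list (E * R)) := forall e, In e l -> 0 <= snd e /\ Mx (fst e) (snd e).

Lemma wR_nonneg l : 0 <= wR l.
Proof. induction l; simpl. lra. pose proof (powp_nonneg (snd a) pp). lra. Qed.

Lemma level_choose t : 0 < t -> exists z, t <= lv z /\ pw z <= 2 * powp t pp.
Proof. intro Ht. set (r := - ln t / LC). destruct (archimed r) as [H1 H2].
 exists (up r - 1)%Z. pose proof LC_pos. pose proof ln2_pos. unfold lv, pw. rewrite minus_IZR. split.
 - idtac. rewrite <- (exp_ln t) at 1 by auto.
   destruct (Req_dec (ln t) (- (IZR (up r) - 1) * LC)) as [e|]. rewrite e; lra.
   left. apply exp_increasing.
   assert (Hl : ln t = - r * LC) by (unfold r; field; lra). rewrite Hl. nra.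
 - rewrite powp_pos by auto. rewrite <- (exp_ln 2) at 2 by lra.
   rewrite <- exp_plus. left. apply exp_increasing.
   assert (Hl : pp * ln t = - r * ln 2) by (unfold r, pp; field; lra). rewrite Hl. nra. Qed.

Lemma convert l : validR l -> exists l', validL l' /\ sumL l' = sumR l /\ wL l' <= 2 * wR l.
Proof. induction l as [|[x t] rest IH]; intro Hv.
 - exists nil. simpl. split. intros e []. split; auto. lra.
 - destruct IH as (l' & Hv' & Hs & Hw). { intros e He. apply Hv. right; auto. }
   destruct (Hv (x, t) (or_introl eq_refl)) as [Ht Hx]. simpl in Ht, Hx.
   destruct (Req_dec t 0) as [->|Htn].
   + exists l'. split; auto. simpl. rewrite (M0_eq x Hx), v_0l. split; auto.
     rewrite powp_0. lra.
   + destruct (level_choose t ltac:(lra)) as (z & Hz1 & Hz2).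
     exists ((x, z) :: l'). split; [|split].
     * intros e [<-|He]; auto. simpl. apply M_mono with t; auto.
     * simpl. congruence.
     * simpl. lra. Qed.

Lemma pw_in_wL e l : In e l -> pw (snd e) <= wL l.
Proof. induction l; simpl. intros []. intros [<-|H]. pose proof (wL_nonneg l); lra.
 pose proof (pw_pos (snd a)). specialize (IHl H). lra. Qed.

Lemma crux l a : validR l -> wR l < pw a -> Mx (sumR l) (lv (a - 1)).
Proof. intros Hv Hw. destruct (convert l Hv) as (l' & Hv' & Hs & Hw'). rewrite <- Hs.
 assert (Hlt : wL l' < pw (a - 1)) by (rewrite pw_pred; lra).
 apply (lem_Z (length l') l' a); auto.
 intros e He. pose proof (pw_in_wL e l' He). assert (pw (snd e) < pw (a-1)) by lra.
 apply pw_lt_inv in H0. lia. Qed.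

Definition is_inf (S : R -> Prop) (m : R) :=
  (forall r, S r -> m <= r) /\ (forall m', (forall r, S r -> m' <= r) -> m' <= m).

Lemma inf_ex (S : R -> Prop) : (exists r, S r) -> (forall r, S r -> 0 <= r) -> exists m, is_inf S m.
Proof. intros [r0 Hr0] Hpos.
 destruct (completeness (fun y => S (- y))) as [l [Hl1 Hl2]].
 { exists 0. intros y Hy. specialize (Hpos _ Hy). lra. }
 { exists (- r0). rewrite Ropp_involutive. auto. }
 exists (- l). split.
 - intros r Hr. assert (- r <= l). apply Hl1. rewrite Ropp_involutive; auto. lra.
 - intros m' Hm'. assert (l <= - m'). apply Hl2. intros y Hy. specialize (Hm' _ Hy). lra. lra. Qed.

Definition SN x r := exists l, validR l /\ sumR l = x /\ r = wR l.
Definition Nf x := epsilon (inhabits 0) (is_inf (SN x)).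

Lemma N_spec x : is_inf (SN x) (Nf x).
Proof. unfold Nf. apply epsilon_spec. apply inf_ex.
 - destruct (M_abs x) as (t & Ht & Hx). exists (wR ((x, t) :: nil)). exists ((x,t)::nil).
   split; [|split; auto]. intros e [<-|[]]. simpl. split; auto; lra. simpl. apply v_0r.
 - intros r (l & _ & _ & ->). apply wR_nonneg. Qed.

Lemma N_le l : validR l -> Nf (sumR l) <= wR l.
Proof. intro Hv. apply (proj1 (N_spec (sumR l))). exists l. auto. Qed.

Lemma N_lt x r : Nf x < r -> exists l, validR l /\ sumR l = x /\ wR l < r.
Proof. intro H. destruct (classic (exists l, validR l /\ sumR l = x /\ wR l < r)) as [|Hn]; auto.
 exfalso. assert (r <= Nf x). { apply (proj2 (N_spec x)). intros r' (l & Hv & Hs & ->).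
 destruct (Rlt_le_dec (wR l) r); auto. exfalso; apply Hn; eauto. } lra. Qed.

Lemma N_ge0 x : 0 <= Nf x.
Proof. apply (proj2 (N_spec x)). intros r (l & _ & _ & ->). apply wR_nonneg. Qed.

Lemma N_small x a : Nf x < pw a -> Mx x (lv (a - 1)).
Proof. intro H. destruct (N_lt x _ H) as (l & Hv & <- & Hw). apply crux; auto. Qed.


Lemma lv_small t : 0 < t -> exists a, lv (a - 1) <= t.
Proof. intro Ht. set (r := - ln t / LC). destruct (archimed r) as [H1 H2].
 exists (up r + 1)%Z. unfold lv. replace (up r + 1 - 1)%Z with (up r) by lia.
 pose proof LC_pos. rewrite <- (exp_ln t) by auto. left. apply exp_increasing.
 assert (Hl : ln t = - r * LC) by (unfold r; field; lra). rewrite Hl. nra. Qed.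

Lemma sumR_app l1 l2 : sumR (l1 ++ l2) = add (sumR l1) (sumR l2).
Proof. induction l1; simpl. rewrite v_0l; auto. rewrite IHl1, v_assoc. auto. Qed.
Lemma wR_app l1 l2 : wR (l1 ++ l2) = wR l1 + wR l2.
Proof. induction l1; simpl. ring. rewrite IHl1. ring. Qed.
Lemma validR_app l1 l2 : validR l1 -> validR l2 -> validR (l1 ++ l2).
Proof. intros H1 H2 e He. apply in_app_or in He. destruct He; auto. Qed.

Definition scl a (l : list (E * R)) := map (fun e => (smul a (fst e), scal_abs k a * snd e)) l.
Lemma scl_valid a l : validR l -> validR (scl a l).
Proof. intros Hv e He. unfold scl in He. apply in_map_iff in He. destruct He as (e0 & <- & He0).
 destruct (Hv e0 He0). simpl. split. apply Rmult_le_pos; auto. apply abs_nonneg. apply M_scale; auto. Qed.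
Lemma scl_sum a l : sumR (scl a l) = smul a (sumR l).
Proof. induction l; simpl. rewrite smul_zero; auto. rewrite IHl, v_smul_add. auto. Qed.
Lemma scl_w a l : validR l -> wR (scl a l) = powp (scal_abs k a) pp * wR l.
Proof. induction l; simpl; intro Hv. ring. rewrite IHl. rewrite powp_mul. ring.
 apply abs_nonneg. apply (Hv a0). left; auto. intros e He. apply Hv. right; auto. Qed.

Lemma N_zero : Nf zero = 0.
Proof. pose proof (N_le nil). simpl in H. pose proof (N_ge0 zero).
 assert (Nf zero <= 0). apply H. intros e []. lra. Qed.

Lemma N_eq0 x : Nf x = 0 -> x = zero.
Proof. intro H. apply M_zero_all. intros t Ht. destruct (lv_small t Ht) as [a Ha].
 apply M_mono with (lv (a - 1)); auto. apply N_small. rewrite H. apply pw_pos. Qed.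

Lemma N_scale_le a x : Nf (smul a x) <= powp (scal_abs k a) pp * Nf x.
Proof. set (c := powp (scal_abs k a) pp).
 destruct (Req_dec (scal_abs k a) 0) as [Ha|Ha].
 { rewrite (abs_zero k a Ha), smul_zs, N_zero. unfold c. rewrite Ha, powp_0. lra. }
 assert (Hc : 0 < c). { unfold c. rewrite powp_pos. apply exp_pos. pose proof (abs_nonneg k a). lra. }
 assert (Nf (smul a x) / c <= Nf x).
 { apply (proj2 (N_spec x)). intros r (l & Hv & <- & ->).
   apply (Rmult_le_reg_r c); auto. unfold Rdiv. rewrite Rmult_assoc, Rinv_l, Rmult_1_r by lra.
   rewrite Rmult_comm. unfold c. rewrite <- scl_w, <- scl_sum by auto. apply N_le. apply scl_valid; auto. }
 apply (Rmult_le_reg_r (/c)). apply Rinv_0_lt_compat; auto.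
 replace (c * Nf x * / c) with (Nf x) by (field; lra). auto. Qed.

Lemma N_scale a x : Nf (smul a x) = powp (scal_abs k a) pp * Nf x.
Proof. apply Rle_antisym. apply N_scale_le.
 destruct (classic (a = zs k)) as [->|Ha].
 { rewrite abs_zs, powp_0, smul_zs, N_zero. lra. }
 destruct (scal_inv k a Ha) as [a' Ha'].
 assert (Hx : x = smul a' (smul a x)) by (rewrite <- v_smul_mul, Ha', v_smul_one; auto).
 pose proof (N_scale_le a' (smul a x)). rewrite <- Hx in H.
 assert (Hp : powp (scal_abs k a) pp * powp (scal_abs k a') pp = 1).
 { rewrite <- powp_mul by apply abs_nonneg. rewrite <- abs_mul, mul_comm, Ha', abs_one. apply powp_1. }
 pose proof (powp_nonneg (scal_abs k a) pp).
 apply Rle_trans with (powp (scal_abs k a) pp * (powp (scal_abs k a') pp * Nf (smul a x))).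
 apply Rmult_le_compat_l; auto. rewrite <- Rmult_assoc, Hp. lra. Qed.

Lemma N_tri x y : Nf (add x y) <= Nf x + Nf y.
Proof. assert (Nf (add x y) - Nf y <= Nf x).
 { apply (proj2 (N_spec x)). intros r1 (l1 & Hv1 & <- & ->).
   assert (Nf (add (sumR l1) y) - wR l1 <= Nf y).
   { apply (proj2 (N_spec y)). intros r2 (l2 & Hv2 & <- & ->).
     rewrite <- sumR_app. pose proof (N_le (l1 ++ l2) (validR_app _ _ Hv1 Hv2)).
     rewrite wR_app in H. lra. }
   lra. }
 lra. Qed.

Lemma N_pnorm : is_p_norm k E add zero smul pp Nf.
Proof. split; [|split; [|split]].
 - apply N_ge0.
 - intro x. split. apply N_eq0. intros ->. apply N_zero.
 - apply N_scale.
 - apply N_tri. Qed.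

Lemma N_top : topology_generated_by E add opp is_open Nf.
Proof. intro U. split.
 - intros HU x Ux. destruct (t_add x zero U HU) as (P & Q & oP & oQ & Px & Qz & HPQ).
   rewrite v_0r; auto.
   destruct (M_small Q oQ Qz) as (del & Hd & G). destruct (lv_small del Hd) as [a Ha].
   exists (pw a). split. apply pw_pos. intros y Hy. rewrite <- (add_sub x y).
   apply HPQ; auto. apply (G _ (lv (a - 1))); auto. apply N_small; auto.
 - intro H. set (F := fun P => is_open P /\ forall z, P z -> U z).
   replace U with (fun x => exists P, F P /\ P x).
   { apply open_union. intros P [HP _]; auto. }
   apply functional_extensionality; intro x. apply propositional_extensionality. split.
   + intros (P & [_ HP] & Px). auto.
   + intro Ux. destruct (H x Ux) as (eps & He & Hb).
     set (t := Rpower (eps / 2) (/ pp)).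
     assert (Ht : 0 < t) by apply exp_pos.
     assert (Htp : powp t pp = eps / 2).
     { rewrite powp_pos by auto. unfold t. change (exp (pp * ln (Rpower (eps/2) (/pp)))) with
        (Rpower (Rpower (eps/2) (/pp)) pp). rewrite Rpower_mult, Rinv_l, Rpower_1. auto. lra.
       pose proof pp_pos; lra. }
     destruct (M_nbhd t x Ht) as (P & oP & Px & HP). exists P. split; auto. split; auto.
     intros y Py. apply Hb. pose proof (N_le ((subv y x, t) :: nil)). simpl in H0.
     rewrite v_0r in H0. rewrite powp_0 in H0 || idtac. apply Rle_lt_trans with (powp t pp + 0).
     apply H0. intros e [<-|[]]. simpl. split. lra. auto. lra. Qed.

Lemma step2_Q : p_normed k E add zero opp smul is_open.
Proof. exists pp, Nf. split. apply pp_pos. split. apply pp_le1. split. apply N_pnorm. apply N_top. Qed.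

End Q.

Lemma step2_P : p_normed k E add zero opp smul is_open.
Proof. destruct M_tri as (C & HC & Htri). apply (step2_Q C HC Htri). Qed.

End P.

Section F.
Variables (p : R) (N : E -> R).
Hypotheses (Hp : 0 < p) (Hpn : is_p_norm k E add zero smul p N)
  (Htop : topology_generated_by E add opp is_open N).

Lemma F_nonneg x : 0 <= N x. Proof. apply (proj1 Hpn). Qed.
Lemma F_zero : N zero = 0. Proof. apply (proj1 (proj2 Hpn)). auto. Qed.
Lemma F_scale a x : N (smul a x) = powp (scal_abs k a) p * N x. Proof. apply (proj1 (proj2 (proj2 Hpn))). Qed.
Lemma F_tri x y : N (add x y) <= N x + N y. Proof. apply (proj2 (proj2 (proj2 Hpn))). Qed.

Lemma ball_open x eps : is_open (fun y => N (subv y x) < eps).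
Proof. apply Htop. intros y Hy. exists (eps - N (subv y x)). split. lra.
 intros z Hz. rewrite (sub_split z y x). pose proof (F_tri (subv z y) (subv y x)). lra. Qed.

Lemma F_FU : frechet_urysohn E is_open.
Proof. intros A x Hcl.
 assert (Hn : forall n : nat, exists y, A y /\ N (subv y x) < / (INR n + 1)).
 { intro n. destruct (Hcl _ (ball_open x (/ (INR n + 1)))) as (y & Hy & Ay).
   rewrite sub_self, F_zero. apply Rinv_0_lt_compat. pose proof (pos_INR n); lra.
   eauto. }
 destruct (nat_choice _ Hn) as [s Hs]. exists s. split. intro n; apply Hs.
 intros U HU Ux. destruct (proj1 (Htop U) HU x Ux) as (eps & He & Hb).
 destruct (inv_lt_archi eps He) as [n0 Hn0]. exists n0. intros n Hn'. apply Hb.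
 specialize (Hn0 n Hn'). destruct (Hs n). lra. Qed.

Lemma small_pow r eps : 0 <= r -> 0 < eps -> exists s, 0 < s /\ forall t, s < t -> powp (/ t) p * r < eps.
Proof. intros Hr He. set (q := (r + 1) / eps). assert (Hq : 0 < q) by (unfold q; apply Rdiv_lt_0_compat; lra).
 exists (exp (ln q / p)). split. apply exp_pos. intros t Ht.
 assert (Htp : 0 < t) by (pose proof (exp_pos (ln q / p)); lra).
 rewrite powp_pos by (apply Rinv_0_lt_compat; auto). rewrite ln_Rinv by auto.
 assert (H1 : ln q / p < ln t).
 { rewrite <- (ln_exp (ln q / p)). apply ln_increasing; auto. apply exp_pos. }
 assert (H2 : p * - ln t < - ln q).
 { apply (Rmult_lt_compat_l p) in H1; auto. unfold Rdiv in H1.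
   rewrite <- Rmult_assoc, (Rmult_comm p), Rmult_assoc, Rinv_r, Rmult_1_r in H1 by lra. lra. }
 apply exp_increasing in H2. rewrite exp_Ropp, exp_ln in H2 by auto.
 assert (/ q = eps / (r + 1)) by (unfold q; field; lra). rewrite H in H2.
 apply Rle_lt_trans with (eps / (r+1) * r). apply Rmult_le_compat_r; auto. lra.
 apply (Rmult_lt_reg_r (r+1)). lra. field_simplify; nra. Qed.

Lemma F_fund : has_fundamental_sequence_of_bounded_sets k E zero smul is_open.
Proof. exists (fun n x => N x <= INR n). split.
 - intros n U HU H0. destruct (proj1 (Htop U) HU zero H0) as (eps & He & Hb).
   destruct (small_pow (INR n) eps (pos_INR n) He) as (s & Hs & Hsp).
   exists s. split; auto. intros t Ht b Hb'.
   assert (Htp : 0 < t) by lra.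
   exists (smul (scal_ofR k (/ t)) b). split.
   + apply Hb. rewrite sub_zero, F_scale, abs_ofR, Rabs_right.
     apply Rle_lt_trans with (powp (/ t) p * INR n). apply Rmult_le_compat_l; auto.
     apply powp_nonneg. apply Hsp; auto. left; apply Rinv_0_lt_compat; auto.
   + rewrite smul_ofR_inv; auto. lra.
 - intros B HB.
   assert (Ho : is_open (fun y => N y < 1)).
   { replace (fun y => N y < 1) with (fun y => N (subv y zero) < 1). apply ball_open.
     apply functional_extensionality; intro y. rewrite sub_zero. auto. }
   destruct (HB _ Ho) as (s & Hs & H). rewrite F_zero; lra.
   destruct (archimed (powp (s + 1) p)) as [Ha _].
   exists (Z.to_nat (up (powp (s + 1) p))). intros x Bx.
   destruct (H (s + 1) ltac:(lra) x Bx) as (u & Hu & ->).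
   rewrite F_scale, abs_ofR, Rabs_right by lra.
   assert (0 <= up (powp (s + 1) p))%Z.
   { apply le_IZR. pose proof (powp_nonneg (s+1) p). lra. }
   rewrite INR_IZR_INZ, Z2Nat.id by auto.
   pose proof (powp_nonneg (s+1) p). pose proof (F_nonneg u).
   apply Rle_trans with (powp (s + 1) p * 1). apply Rmult_le_compat_l; lra. lra. Qed.

End F.

Lemma main_equiv : p_normed k E add zero opp smul is_open <->
  (frechet_urysohn E is_open /\ has_fundamental_sequence_of_bounded_sets k E zero smul is_open).
Proof. split.
 - intros (p & N & Hp & Hp1 & Hpn & Htop). split. eapply F_FU; eauto. eapply F_fund; eauto.
 - intros [HFU HF]. destruct (STEP1 HFU HF) as (U0 & o & z & b). apply (step2_P U0 o z b). Qed.

End V.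

Theorem mainTheorem6 (k : field_choice) (E : Type)
  (add : E -> E -> E) (zero : E) (opp : E -> E) (smul : scal k -> E -> E)
  (is_open : (E -> Prop) -> Prop)
  (HE : is_tvs k E add zero opp smul is_open) :
  p_normed k E add zero opp smul is_open <->
  (frechet_urysohn E is_open /\
   has_fundamental_sequence_of_bounded_sets k E zero smul is_open).
Proof. apply main_equiv. exact HE. Qed.
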